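(* Let $\{m_k:k\ge0\}$ be positive reals with $\sum_k m_k=\infty$ and $m_k\to0$; let $S_0=0$ and $S_{k+1}=\sum_{i=0}^k m_i$. Define $f_j:(S_j,S_{j+1}]\to\mathbb{R}$, $j\ge0$, recursively with $c_0=0$ and $c_j=f_{j-1}(S_j)$ for $j\ge1$, by $$f_j(x)=\begin{cases}-x+S_j+c_j & x\in(S_j,S_j+\tfrac{m_j}{16})\\ \tfrac{8}{m_j}(x-S_j-\tfrac{m_j}{8})^2-\tfrac{3m_j}{32}+c_j & x\in[S_j+\tfrac{m_j}{16},S_j+\tfrac{3m_j}{16})\\ -\tfrac{5m_j}{16}\exp\!\big(\tfrac{5m_j/16}{x-S_j-m_j/2}+1\big)+\tfrac{m_j}{4}+c_j & x\in[S_j+\tfrac{3m_j}{16},S_j+\tfrac{m_j}{2})\\ \tfrac{m_j}{4}+c_j & x=S_j+\tfrac{m_j}{2}\\ \tfrac{5m_j}{16}\exp\!\big(\tfrac{-5m_j/16}{x-S_j-m_j/2}+1\big)+\tfrac{m_j}{4}+c_j & x\in(S_j+\tfrac{m_j}{2},S_j+\tfrac{13m_j}{16})\\ -\tfrac{8}{m_j}(x-S_j-\tfrac{7m_j}{8})^2+\tfrac{19m_j}{32}+c_j & x\in[S_j+\tfrac{13m_j}{16},S_j+\tfrac{15m_j}{16})\\ -x+S_j+\tfrac{3m_j}{2}+c_j & x\in[S_j+\tfrac{15m_j}{16},S_{j+1}],\end{cases}$$ and define $F:\mathbb{R}\to\mathbb{R}$ by $F(x)=-x$ for $x\le0$ and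 $F(x)=f_j(x)$ for $x\in(S_j,S_{j+1}]$, $j\ge0$. Then $F$ is continuous and differentiable on $\mathbb{R}$, is bounded from below, and its derivative $\dot F$ is locally Lipschitz continuous. Moreover, $F(S_j)=S_j/2$ and $\dot F(S_j)=-1$ for all $j\ge0$. *)

(* Defs.v *)
From Stdlib Require Import Reals ClassicalEpsilon.
From Coquelicot Require Import Coquelicot.
Open Scope R_scope.

Fixpoint Ssum (m : nat -> R) (k : nat) : R :=
  match k with
  | O => 0
  | Datatypes.S k' => Ssum m k' + m k'
  end.

(* The piece f_j on (S_j, S_{j+1}], with parameters Sj = S_j, mj = m_j,
   cj = c_j.  (Values outside (S_j, S_{j+1}] are irrelevant.) *)
Definition fpiece (Sj mj cj x : R) : R :=
  if Rlt_dec x (Sj + mj / 16) then - x + Sj + cj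
  else if Rlt_dec x (Sj + 3 * mj / 16) then
    8 / mj * (x - Sj - mj / 8) ^ 2 - 3 * mj / 32 + cj
  else if Rlt_dec x (Sj + mj / 2) then
    - (5 * mj / 16) * exp ((5 * mj / 16) / (x - Sj - mj / 2) + 1) + mj / 4 + cj
  else if Req_EM_T x (Sj + mj / 2) then mj / 4 + cj
  else if Rlt_dec x (Sj + 13 * mj / 16) then
    (5 * mj / 16) * exp ((- (5 * mj / 16)) / (x - Sj - mj / 2) + 1) + mj / 4 + cj
  else if Rlt_dec x (Sj + 15 * mj / 16) then
    - (8 / mj) * (x - Sj - 7 * mj / 8) ^ 2 + 19 * mj / 32 + cj
  else - x + Sj + 3 * mj / 2 + cj.

Definition fj (m : nat -> R) (j : nat) (cj x : R) : R :=
  fpiece (Ssum m j) (m j) cj x.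

Fixpoint cseq (m : nat -> R) (j : nat) : R :=
  match j with
  | O => 0
  | Datatypes.S j' => fj m j' (cseq m j') (Ssum m j)
  end.

Definition Fbig (m : nat -> R) (x : R) : R :=
  if Rle_dec x 0 then - x
  else
    let j := epsilon (inhabits O)
               (fun j => Ssum m j < x <= Ssum m (Datatypes.S j)) in
    fj m j (cseq m j) x.

(* Main.v *)
Require Import Defs.
From Stdlib Require Import Reals Lra Psatz ClassicalEpsilon.
From Coquelicot Require Import Coquelicot.
Open Scope R_scope.

Lemma deriv_glue (f g1 g2 : R -> R) x d l : 0 < d ->
  (forall y, x - d < y < x -> f y = g1 y) ->
  (forall y, x <= y < x + d -> f y = g2 y) -> g1 x = g2 x ->
  is_derive g1 x l -> is_derive g2 x l -> is_derive f x l.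
Proof.
intros Hd E1 E2 E12 D1 D2.
rewrite is_derive_Reals in *.
intros eps He.
destruct (D1 eps He) as [d1 Hd1]. destruct (D2 eps He) as [d2 Hd2].
assert (Hp : 0 < Rmin d (Rmin d1 d2)).
{ destruct d1, d2; simpl. repeat apply Rmin_pos; lra. }
exists (mkposreal _ Hp). simpl. intros h hne hlt.
assert (Hm1 := Rmin_l d (Rmin d1 d2)). assert (Hm2 := Rmin_r d (Rmin d1 d2)).
assert (Hm3 := Rmin_l d1 d2). assert (Hm4 := Rmin_r d1 d2).
rewrite (E2 x) by lra.
destruct (Rlt_or_le h 0) as [hn|hp].
- rewrite E1. rewrite <- E12. apply Hd1; auto. lra.
  split; [|lra]. apply Rabs_def2 in hlt. lra.
- rewrite E2. apply Hd2; auto. lra.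
  split; [lra|]. apply Rabs_def2 in hlt. lra.
Qed.

Lemma deriv_loc (f g : R -> R) x d l : 0 < d ->
  (forall y, x - d < y < x + d -> f y = g y) -> is_derive g x l -> is_derive f x l.
Proof.
intros Hd E D. apply (deriv_glue f g g x d); auto.
intros y Hy; apply E; lra. intros y Hy; apply E; lra.
Qed.

Definition lipon (P : R -> Prop) (g : R -> R) (K : R) :=
  forall y z, P y -> P z -> Rabs (g y - g z) <= K * Rabs (y - z).

Lemma lipon_glue (A B : R -> Prop) g K b :
  (forall y, A y -> y <= b) -> (forall z, B z -> b <= z) -> A b -> B b ->
  lipon A g K -> lipon B g K -> lipon (fun y => A y \/ B y) g K.
Proof.
intros HA HB Ab Bb LA LB.
assert (K0 : forall y z, A y -> B z -> Rabs (g y - g z) <= K * Rabs (y - z)).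
{ intros y z Ay Bz. specialize (HA y Ay). specialize (HB z Bz).
  specialize (LA y b Ay Ab). specialize (LB b z Bb Bz).
  rewrite (Rabs_left1 (y - b)) in LA by lra. rewrite (Rabs_left1 (b - z)) in LB by lra.
  rewrite (Rabs_left1 (y - z)) by lra.
  replace (g y - g z) with ((g y - g b) + (g b - g z)) by ring.
  assert (E : K * - (y - z) = K * -(y-b) + K * -(b - z)) by ring.
  rewrite E. eapply Rle_trans. apply Rabs_triang. lra. }
intros y z [Ay|By] [Az|Bz]; auto.
rewrite Rabs_minus_sym, (Rabs_minus_sym y). auto.
Qed.

Lemma lipon_mono (A B : R -> Prop) g K K' : (forall y, B y -> A y) -> K <= K' ->
  lipon A g K -> lipon B g K'.
Proof.
intros HBA HK L y z By Bz. eapply Rle_trans. apply L; auto.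
apply Rmult_le_compat_r; auto. apply Rabs_pos.
Qed.

Lemma lipon_ext (A : R -> Prop) g g' K : (forall y, A y -> g y = g' y) ->
  lipon A g' K -> lipon A g K.
Proof. intros E L y z Ay Az. rewrite !E; auto. Qed.

Lemma exp_poly s : 0 <= s ->
  s ^ 2 <= 150 * exp s /\ s ^ 3 <= 150 * exp s /\ s ^ 4 + 2 * s ^ 3 <= 150 * exp s.
Proof.
intros Hs.
assert (E : exp s = exp (s/5) ^ 5).
{ replace s with (s/5 + (s/5 + (s/5 + (s/5 + s/5)))) at 1 by field.
  rewrite !exp_plus. ring. }
assert (HX := exp_ineq1_le (s/5)).
assert (HY : (1 + s/5) ^ 5 <= exp (s/5) ^ 5) by (apply pow_incr; lra).
rewrite E.
assert (P : (1 + s/5)^5 = 1 + s + 2*s^2/5 + 2*s^3/25 + s^4/125 + s^5/3125) by field.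
rewrite P in HY.
assert (0 <= s^2) by (apply pow_le; lra).
assert (0 <= s^3) by (apply pow_le; lra).
assert (0 <= s^4) by (apply pow_le; lra).
assert (0 <= s^5) by (apply pow_le; lra).
repeat split; lra.
Qed.

Definition phi t := if Rlt_dec 0 t then 5/16 * exp (1 - (5/16)/t) else 0.
Definition dphi t := if Rlt_dec 0 t then ((5/16)/t)^2 * exp (1 - (5/16)/t) else 0.
Definition ddphi t := exp (1 - (5/16)/t) * ((5/16)^3 / t^4 - 2 * (5/16)^2 / t^3).
Definition K1 := 480 * exp 1.

Lemma exp_split x : exp (1 - x) = exp 1 * / exp x.
Proof. unfold Rminus. rewrite exp_plus, exp_Ropp. reflexivity. Qed.

Lemma phi_bound t : 0 < t -> 0 <= phi t <= K1 * t^2.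
Proof.
intros Ht. unfold phi, K1. destruct (Rlt_dec 0 t) as [_|]; [|lra].
set (s := 5/16/t). assert (Hs : 0 < s) by (unfold s; apply Rdiv_lt_0_compat; lra).
assert (Hst : s * t = 5/16) by (unfold s; field; lra).
rewrite exp_split. assert (He := exp_pos 1). assert (HE := exp_pos s).
destruct (exp_poly s) as [P2 _]; [lra|].
set (E := exp s) in *. set (e := exp 1) in *.
split.
- apply Rmult_le_pos; [lra|]. apply Rmult_le_pos; [lra|]. left; apply Rinv_0_lt_compat; lra.
- assert (H1 : 5/16 <= 480 * t^2 * E).
  { assert (0 <= t^2 * (150 * E - s^2)) by (apply Rmult_le_pos; nra). nra. }
  replace (5/16 * (e * / E)) with (e * (5/16 / E)) by (field; lra).
  replace (480 * e * t^2) with (e * (480 * t^2)) by ring.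
  apply Rmult_le_compat_l; [lra|].
  apply Rle_div_l; lra.
Qed.

Lemma dphi_bound t : 0 < t -> 0 <= dphi t <= K1 * t.
Proof.
intros Ht. unfold dphi, K1. destruct (Rlt_dec 0 t) as [_|]; [|lra].
set (s := 5/16/t). assert (Hs : 0 < s) by (unfold s; apply Rdiv_lt_0_compat; lra).
assert (Hst : s * t = 5/16) by (unfold s; field; lra).
rewrite exp_split. assert (He := exp_pos 1). assert (HE := exp_pos s).
destruct (exp_poly s) as [_ [P3 _]]; [lra|].
set (E := exp s) in *. set (e := exp 1) in *.
split.
- apply Rmult_le_pos; [nra|]. apply Rmult_le_pos; [lra|]. left; apply Rinv_0_lt_compat; lra.
- assert (H1 : s^2 <= 480 * t * E).
  { assert (0 <= t * (150 * E - s^3)) by (apply Rmult_le_pos; nra). nra. }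
  replace (s^2 * (e * / E)) with (e * (s^2 / E)) by (field; lra).
  replace (480 * e * t) with (e * (480 * t)) by ring.
  apply Rmult_le_compat_l; [lra|].
  apply Rle_div_l; lra.
Qed.

Lemma ddphi_bound t : 0 < t -> Rabs (ddphi t) <= K1.
Proof.
intros Ht. unfold ddphi, K1.
set (s := 5/16/t). assert (Hs : 0 < s) by (unfold s; apply Rdiv_lt_0_compat; lra).
rewrite exp_split. assert (He := exp_pos 1). assert (HE := exp_pos s).
destruct (exp_poly s) as [_ [_ P4]]; [lra|].
replace (exp 1 * / exp s * ((5 / 16) ^ 3 / t ^ 4 - 2 * (5 / 16) ^ 2 / t ^ 3))
  with (exp 1 * (16/5) * ((s^4 - 2 * s^3) / exp s)) by (unfold s; field; repeat split; try apply pow_nonzero; try apply exp_neq_0; lra).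
set (E := exp s) in *. set (e := exp 1) in *.
rewrite Rabs_mult, Rabs_right by lra.
replace (480 * e) with (e * (16/5) * 150) by lra.
apply Rmult_le_compat_l; [lra|].
unfold Rdiv. rewrite Rabs_mult, (Rabs_right (/E)) by (left; apply Rinv_0_lt_compat; lra).
apply Rle_div_l; [lra|].
assert (0 <= s^3) by (apply pow_le; lra). assert (0 <= s^4) by (apply pow_le; lra).
apply Rabs_le_between. lra.  
Qed.

Lemma K1_pos : 0 < K1.
Proof. unfold K1. assert (H := exp_pos 1). lra. Qed.

Lemma phi_deriv t : is_derive phi t (dphi t).
Proof.
destruct (Rlt_or_le 0 t) as [Ht|Ht].
- apply (deriv_loc _ (fun y => 5/16 * exp (1 - (5/16)/y)) t t); [lra| |].
  + intros y Hy. unfold phi. destruct (Rlt_dec 0 y); [reflexivity|lra].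
  + unfold dphi. destruct (Rlt_dec 0 t); [|lra].
    auto_derive; [lra|].
    replace (exp (1 + - (5/16 * / t))) with (exp (1 - 5/16/t)) by (f_equal; unfold Rdiv; ring).
    field. lra.
- destruct Ht as [Ht|Ht].
  + apply (deriv_loc _ (fun _ => 0) t (-t)); [lra| |].
    * intros y Hy. unfold phi. destruct (Rlt_dec 0 y); [lra|reflexivity].
    * unfold dphi. destruct (Rlt_dec 0 t); [lra|]. auto_derive; auto.
  + subst t. unfold dphi. destruct (Rlt_dec 0 0); [lra|].
    apply is_derive_Reals. intros eps He.
    assert (HK := K1_pos).
    assert (Hd : 0 < eps / K1) by (apply Rdiv_lt_0_compat; lra).
    exists (mkposreal _ Hd). simpl. intros h hne hlt.
    replace (phi 0) with 0 by (unfold phi; destruct (Rlt_dec 0 0); lra).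
    rewrite Rplus_0_l.
    destruct (Rlt_or_le 0 h) as [hp|hn].
    * destruct (phi_bound h hp) as [B1 B2].
      rewrite Rabs_right in hlt by lra.
      replace ((phi h - 0) / h - 0) with (phi h / h) by (field; lra).
      rewrite Rabs_right by (apply Rle_ge, Rdiv_le_0_compat; lra).
      apply Rlt_div_l; [lra|]. apply Rlt_div_r in hlt; [|lra].
      eapply Rle_lt_trans. apply B2. simpl. nra.
    * replace (phi h) with 0 by (unfold phi; destruct (Rlt_dec 0 h); lra).
      replace ((0 - 0) / h - 0) with 0 by (field; lra). rewrite Rabs_R0. lra.
Qed.

Lemma dphi_deriv t : 0 < t -> is_derive dphi t (ddphi t).
Proof.
intros Ht.
apply (deriv_loc _ (fun y => ((5/16)/y)^2 * exp (1 - (5/16)/y)) t t); [lra| |].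
+ intros y Hy. unfold dphi. destruct (Rlt_dec 0 y); [reflexivity|lra].
+ unfold ddphi. auto_derive; [lra|].
  replace (exp (1 + - (5/16 * / t))) with (exp (1 - 5/16/t)) by (f_equal; unfold Rdiv; ring).
  field. lra.
Qed.

Lemma dphi_lip_pos : lipon (fun y => 0 < y) dphi K1.
Proof.
intros y z Hy Hz.
destruct (MVT_gen dphi z y ddphi) as [c [Hc E]].
- intros x Hx. apply dphi_deriv.
  assert (Rmin z y > 0) by (apply Rmin_glb_lt; lra). lra.
- intros x Hx. apply continuity_pt_filterlim.
  assert (C : continuous dphi x).
  { apply (ex_derive_continuous (K := R_AbsRing) (V := R_NormedModule)). eexists. apply dphi_deriv.
    assert (Rmin z y > 0) by (apply Rmin_glb_lt; lra). lra. }
  exact C.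
- rewrite E. rewrite Rabs_mult.
  apply Rmult_le_compat_r; [apply Rabs_pos|].
  apply ddphi_bound.
  assert (Rmin z y > 0) by (apply Rmin_glb_lt; lra). lra.
Qed.

Lemma dphi_lip_nn : lipon (fun y => 0 <= y) dphi K1.
Proof.
assert (D0 : dphi 0 = 0) by (unfold dphi; destruct (Rlt_dec 0 0); lra).
assert (HK := K1_pos).
assert (B : forall z, 0 < z -> Rabs (dphi 0 - dphi z) <= K1 * Rabs (0 - z)).
{ intros z Hz. rewrite D0. destruct (dphi_bound z Hz).
  rewrite Rabs_left1 by lra. rewrite Rabs_left1 by lra. lra. }
intros y z Hy Hz.
destruct Hy as [Hy|Hy]; destruct Hz as [Hz|Hz].
- apply dphi_lip_pos; auto.
- subst z. rewrite Rabs_minus_sym, (Rabs_minus_sym y). auto.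
- subst y. auto.
- subst. rewrite !Rminus_diag, Rabs_R0. lra.
Qed.

Lemma dphi_lip : lipon (fun _ => True) dphi K1.
Proof.
apply (lipon_mono (fun y => y <= 0 \/ 0 <= y) _ _ K1); [intros y _; lra|lra|].
apply (lipon_glue _ _ _ _ 0); try (intros; lra).
- intros y z Hy Hz. unfold dphi.
  destruct (Rlt_dec 0 y); [lra|]. destruct (Rlt_dec 0 z); [lra|].
  rewrite Rminus_diag, Rabs_R0. apply Rmult_le_pos. left; apply K1_pos. apply Rabs_pos.
- apply dphi_lip_nn.
Qed.

Lemma exp_le1 x : x <= 0 -> exp x <= 1.
Proof.
intros H. destruct (Rle_lt_or_eq_dec _ _ H) as [H'|H'].
- rewrite <- exp_0. left. apply exp_increasing. lra.
- subst. rewrite exp_0. lra.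
Qed.

Lemma phi_le t : t <= 5/16 -> 0 <= phi t <= 5/16.
Proof.
intros Ht. unfold phi. destruct (Rlt_dec 0 t); [|lra].
assert (exp (1 - 5/16/t) <= 1).
{ apply exp_le1. assert (1 <= 5/16/t). { apply Rle_div_r; lra. } lra. }
assert (0 < exp (1 - 5/16/t)) by apply exp_pos. nra.
Qed.

Lemma phi_a : phi (5/16) = 5/16.
Proof. unfold phi. destruct (Rlt_dec 0 (5/16)); [|lra].
replace (1 - 5/16/(5/16)) with 0 by field. rewrite exp_0. ring. Qed.
Lemma phi_ma : phi (-(5/16)) = 0.
Proof. unfold phi. destruct (Rlt_dec 0 (-(5/16))); lra. Qed.
Lemma dphi_a : dphi (5/16) = 1.
Proof. unfold dphi. destruct (Rlt_dec 0 (5/16)); [|lra].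
replace (1 - 5/16/(5/16)) with 0 by field. rewrite exp_0. field. Qed.
Lemma dphi_ma : dphi (-(5/16)) = 0.
Proof. unfold dphi. destruct (Rlt_dec 0 (-(5/16))); lra. Qed.

Definition g1 (u : R) := - u.
Definition g2 (u : R) := 8 * (u - 1/8)^2 - 3/32.
Definition g3 (u : R) := 1/4 + phi (u - 1/2) - phi (1/2 - u).
Definition g4 (u : R) := - 8 * (u - 7/8)^2 + 19/32.
Definition g5 (u : R) := - u + 3/2.
Definition dg2 (u : R) := 16 * (u - 1/8).
Definition dg3 (u : R) := dphi (u - 1/2) + dphi (1/2 - u).
Definition dg4 (u : R) := - 16 * (u - 7/8).

Definition H (u : R) :=
  if Rlt_dec u (1/16) then g1 u else if Rlt_dec u (3/16) then g2 u
  else if Rlt_dec u (13/16) then g3 u else if Rlt_dec u (15/16) then g4 u else g5 u.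
Definition hd (u : R) :=
  if Rlt_dec u (1/16) then -1 else if Rlt_dec u (3/16) then dg2 u
  else if Rlt_dec u (13/16) then dg3 u else if Rlt_dec u (15/16) then dg4 u else -1.

Lemma g1_d u : is_derive g1 u (-1). Proof. unfold g1. auto_derive; auto. Qed.
Lemma g5_d u : is_derive g5 u (-1). Proof. unfold g5. auto_derive; auto; ring. Qed.
Lemma g2_d u : is_derive g2 u (dg2 u). Proof. unfold g2, dg2. auto_derive; auto; ring. Qed.
Lemma g4_d u : is_derive g4 u (dg4 u). Proof. unfold g4, dg4. auto_derive; auto; ring. Qed.
Lemma g3_d u : is_derive g3 u (dg3 u).
Proof. unfold g3, dg3. auto_derive.
- split; [eexists; apply phi_deriv|split; [eexists; apply phi_deriv|exact I]].
- rewrite !(is_derive_unique _ _ _ (phi_deriv _)). unfold Rminus. ring.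
Qed.

Lemma deriv_int (f g : R -> R) lo hi u l : lo < u < hi ->
  (forall y, lo < y < hi -> f y = g y) -> is_derive g u l -> is_derive f u l.
Proof.
intros Hu E D. apply (deriv_loc f g u (Rmin (u - lo) (hi - u))); auto.
apply Rmin_pos; lra.
intros y Hy. apply E. assert (H1 := Rmin_l (u - lo) (hi - u)). assert (H2 := Rmin_r (u - lo) (hi - u)). lra.
Qed.

Ltac hcases := unfold H, hd; repeat (destruct (Rlt_dec _ _)); try lra.

Lemma H_deriv u : is_derive H u (hd u).
Proof.
destruct (Rtotal_order u (1/16)) as [L1|[E1|G1]].
{ apply (deriv_int H g1 (u-1) (1/16)); [lra| intros y Hy; hcases; reflexivity|].
  hcases. apply g1_d. }
{ subst u. apply (deriv_glue H g1 g2 (1/16) (1/16)); [lra|intros y Hy; hcases; reflexivity|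
   intros y Hy; hcases; reflexivity| unfold g1, g2; field | |].
  - hcases. replace (dg2 (1/16)) with (-1) by (unfold dg2; field). apply g1_d.
  - hcases. apply g2_d. }
destruct (Rtotal_order u (3/16)) as [L2|[E2|G2]].
{ apply (deriv_int H g2 (1/16) (3/16)); [lra| intros y Hy; hcases; reflexivity|].
  hcases. apply g2_d. }
{ subst u. apply (deriv_glue H g2 g3 (3/16) (1/16)); [lra|intros y Hy; hcases; reflexivity|
   intros y Hy; hcases; reflexivity| | |].
  - unfold g2, g3. replace (3/16 - 1/2) with (-(5/16)) by field.
    replace (1/2 - 3/16) with (5/16) by field. rewrite phi_a, phi_ma. field.
  - hcases. replace (dg3 (3/16)) with (dg2 (3/16)). apply g2_d.
    unfold dg2, dg3. replace (3/16 - 1/2) with (-(5/16)) by field.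
    replace (1/2 - 3/16) with (5/16) by field. rewrite dphi_a, dphi_ma. field.
  - hcases. apply g3_d. }
destruct (Rtotal_order u (13/16)) as [L3|[E3|G3]].
{ apply (deriv_int H g3 (3/16) (13/16)); [lra| intros y Hy; hcases; reflexivity|].
  hcases. apply g3_d. }
{ subst u. apply (deriv_glue H g3 g4 (13/16) (1/16)); [lra|intros y Hy; hcases; reflexivity|
   intros y Hy; hcases; reflexivity| | |].
  - unfold g4, g3. replace (13/16 - 1/2) with (5/16) by field.
    replace (1/2 - 13/16) with (-(5/16)) by field. rewrite phi_a, phi_ma. field.
  - hcases. replace (dg4 (13/16)) with (dg3 (13/16)). apply g3_d.
    unfold dg4, dg3. replace (13/16 - 1/2) with (5/16) by field.
    replace (1/2 - 13/16) with (-(5/16)) by field. rewrite dphi_a, dphi_ma. field.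
  - hcases. apply g4_d. }
destruct (Rtotal_order u (15/16)) as [L4|[E4|G4]].
{ apply (deriv_int H g4 (13/16) (15/16)); [lra| intros y Hy; hcases; reflexivity|].
  hcases. apply g4_d. }
{ subst u. apply (deriv_glue H g4 g5 (15/16) (1/16)); [lra|intros y Hy; hcases; reflexivity|
   intros y Hy; hcases; reflexivity| unfold g4, g5; field | |].
  - hcases. replace (-1) with (dg4 (15/16)) by (unfold dg4; field). apply g4_d.
  - hcases. apply g5_d. }
{ apply (deriv_int H g5 (15/16) (u+1)); [lra| intros y Hy; hcases; reflexivity|].
  hcases. apply g5_d. }
Qed.

Definition Kh := 16 + 2 * K1.

Lemma Kh_pos : 0 < Kh.
Proof. unfold Kh. assert (H := K1_pos). lra. Qed.

Lemma lip_const (A : R -> Prop) c : lipon A (fun _ => c) Kh.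
Proof. intros y z _ _. rewrite Rminus_diag, Rabs_R0. apply Rmult_le_pos. left; apply Kh_pos. apply Rabs_pos. Qed.

Lemma lip_lin (A : R -> Prop) c b : Rabs c <= 16 -> lipon A (fun u => c * (u - b)) Kh.
Proof. intros Hc y z _ _. replace (c * (y - b) - c * (z - b)) with (c * (y - z)) by ring.
rewrite Rabs_mult. apply Rmult_le_compat_r. apply Rabs_pos. unfold Kh. assert (H := K1_pos). lra. Qed.

Lemma lip_dg3 (A : R -> Prop) : lipon A dg3 Kh.
Proof.
intros y z _ _. unfold dg3.
replace (dphi (y - 1/2) + dphi (1/2 - y) - (dphi (z - 1/2) + dphi (1/2 - z))) with
  ((dphi (y - 1/2) - dphi (z - 1/2)) + (dphi (1/2 - y) - dphi (1/2 - z))) by ring.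
eapply Rle_trans. apply Rabs_triang.
assert (L1 := dphi_lip (y - 1/2) (z - 1/2) I I).
assert (L2 := dphi_lip (1/2 - y) (1/2 - z) I I).
replace (y - 1/2 - (z - 1/2)) with (y - z) in L1 by ring.
replace (1/2 - y - (1/2 - z)) with (-(y - z)) in L2 by ring. rewrite Rabs_Ropp in L2.
assert (0 <= Rabs (y - z)) by apply Rabs_pos.
unfold Kh. nra.
Qed.

Lemma dg3_a : dg3 (3/16) = 1.
Proof. unfold dg3. replace (3/16 - 1/2) with (-(5/16)) by field.
replace (1/2 - 3/16) with (5/16) by field. rewrite dphi_a, dphi_ma. ring. Qed.
Lemma dg3_b : dg3 (13/16) = 1.
Proof. unfold dg3. replace (13/16 - 1/2) with (5/16) by field.
replace (1/2 - 13/16) with (-(5/16)) by field. rewrite dphi_a, dphi_ma. ring. Qed.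

Lemma hd_lip : forall y z, Rabs (hd y - hd z) <= Kh * Rabs (y - z).
Proof.
intros y z.
assert (L : lipon (fun u => (((u <= 1/16 \/ 1/16 <= u <= 3/16) \/ 3/16 <= u <= 13/16)
           \/ 13/16 <= u <= 15/16) \/ 15/16 <= u) hd Kh).
{ apply (lipon_glue _ _ _ _ (15/16)); try (intros; lra).
  apply (lipon_glue _ _ _ _ (13/16)); try (intros; lra).
  apply (lipon_glue _ _ _ _ (3/16)); try (intros; lra).
  apply (lipon_glue _ _ _ _ (1/16)); try (intros; lra).
  - apply (lipon_ext _ _ (fun _ => -1)). intros u Hu; hcases. assert (u = 1/16) by lra. subst. unfold dg2; field. apply lip_const.
  - apply (lipon_ext _ _ (fun u => 16 * (u - 1/8))). intros u Hu; hcases; try reflexivity.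
    assert (u = 3/16) by lra. subst. rewrite dg3_a. field.
    apply lip_lin. rewrite Rabs_right; lra.
  - apply (lipon_ext _ _ dg3). intros u Hu; hcases; try reflexivity.
    assert (u = 13/16) by lra. subst. rewrite dg3_b. unfold dg4. field.
    apply lip_dg3.
  - apply (lipon_ext _ _ (fun u => -16 * (u - 7/8))). intros u Hu; hcases; try reflexivity; try (unfold dg4; ring).
    apply lip_lin. rewrite Rabs_left; lra.
  - apply (lipon_ext _ _ (fun _ => -1)). intros u Hu; hcases. apply lip_const. }
apply L; lra.
Qed.

Lemma H_lb u : 0 <= u <= 1 -> -1/8 <= H u.
Proof.
intros Hu. hcases; unfold g1, g2, g3, g4, g5.
- lra.
- nra.
- destruct (phi_le (u - 1/2)); [lra|]. destruct (phi_le (1/2 - u)); [lra|]. lra.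
- nra.
- lra.
Qed.

Lemma H_one : H 1 = 1/2.
Proof. hcases. unfold g5. field. Qed.
Lemma hd_zero : hd 0 = -1.
Proof. hcases. Qed.
Lemma hd_one : hd 1 = -1.
Proof. hcases. Qed.
Lemma H_low u : u < 1/16 -> H u = - u.
Proof. intros. hcases. reflexivity. Qed.
Lemma H_high u : 15/16 <= u -> H u = - u + 3/2.
Proof. intros. hcases. reflexivity. Qed.
Lemma fpiece_scale Sj mj cj x : 0 < mj -> fpiece Sj mj cj x = cj + mj * H ((x - Sj)/mj).
Proof.
intros Hm. set (u := (x - Sj)/mj).
replace x with (Sj + mj * u) by (unfold u; field; lra). clearbody u.
unfold fpiece, H, g1, g2, g3, g4, g5, phi.
repeat (destruct (Rlt_dec _ _)); repeat (destruct (Req_EM_T _ _)); try nra.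
- field; lra.
- assert (u < 1/2) by nra.
  replace (5 * mj / 16 / (Sj + mj * u - Sj - mj / 2) + 1) with (1 - 5 / 16 / (1 / 2 - u))
    by (field; repeat split; lra). field.
- assert (u > 1/2) by nra.
  replace (- (5 * mj / 16) / (Sj + mj * u - Sj - mj / 2) + 1) with (1 - 5 / 16 / (u - 1 / 2))
    by (field; repeat split; lra). field.
- field; lra.
Qed.

Definition Fj (m : nat -> R) j y := Ssum m j / 2 + m j * H ((y - Ssum m j) / m j).

Lemma Ssum_nonneg m (hpos : forall k, 0 < m k) j : 0 <= Ssum m j.
Proof. induction j; simpl; [lra|]. specialize (hpos j). lra. Qed.

Lemma Ssum_le m (hpos : forall k, 0 < m k) a b : (a <= b)%nat -> Ssum m a <= Ssum m b.
Proof. induction 1; [lra|]. simpl. specialize (hpos m0). lra. Qed.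

Lemma Ssum_lt m (hpos : forall k, 0 < m k) a b : (a < b)%nat -> Ssum m a < Ssum m b.
Proof. intros Hab. apply Rlt_le_trans with (Ssum m (S a)).
simpl. specialize (hpos a). lra. apply Ssum_le; auto. Qed.

Lemma cseq_eq m (hpos : forall k, 0 < m k) j : cseq m j = Ssum m j / 2.
Proof.
induction j; simpl; [lra|]. unfold fj. rewrite fpiece_scale by auto.
rewrite IHj. replace ((Ssum m j + m j - Ssum m j) / m j) with 1 by (field; specialize (hpos j); lra).
rewrite H_one. field.
Qed.

Lemma LOC m (hpos : forall k, 0 < m k) j y : Ssum m j < y <= Ssum m (S j) -> Fbig m y = Fj m j y.
Proof.
intros Hy. unfold Fbig. destruct (Rle_dec y 0) as [r|_].
{ assert (H0 := Ssum_nonneg m hpos j). lra. }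
cbv zeta.
set (P := fun j0 => Ssum m j0 < y <= Ssum m (S j0)).
assert (Hj : P (epsilon (inhabits O) P)) by (apply epsilon_spec; exists j; exact Hy).
set (j' := epsilon (inhabits O) P) in *. clearbody j'. unfold P in Hj.
assert (j' = j).
{ destruct (Nat.lt_total j' j) as [L|[E|L]]; auto.
  - assert (Ssum m (S j') <= Ssum m j) by (apply Ssum_le; auto). lra.
  - assert (Ssum m (S j) <= Ssum m j') by (apply Ssum_le; auto). lra. }
subst j'. unfold fj, Fj. rewrite fpiece_scale by auto. rewrite cseq_eq by auto. reflexivity.
Qed.

Lemma LOC0 m (hpos : forall k, 0 < m k) y : y <= 0 -> Fbig m y = Fj m 0 y.
Proof.
intros Hy. unfold Fbig. destruct (Rle_dec y 0) as [_|]; [|lra].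
unfold Fj. simpl. assert (H0 := hpos 0%nat).
rewrite H_low; [field; lra|]. apply Rle_lt_trans with 0; [|lra].
replace ((y - 0) / m 0%nat) with (y * / m 0%nat) by (field; lra).
assert (0 < / m 0%nat) by (apply Rinv_0_lt_compat; lra). nra.
Qed.

Lemma LOCprev m (hpos : forall k, 0 < m k) k y :
  Ssum m (S k) - m k / 16 < y <= Ssum m (S k) -> Fj m k y = Fj m (S k) y.
Proof.
intros [Hy1 Hy2]. unfold Fj. simpl in *. assert (H0 := hpos k). assert (H1 := hpos (S k)).
assert (A1 : (y - (Ssum m k + m k)) / m (S k) < 1/16).
{ apply Rle_lt_trans with 0; [|lra]. unfold Rdiv.
  assert (0 < / m (S k)) by (apply Rinv_0_lt_compat; lra). nra. }
assert (A2 : 15/16 <= (y - Ssum m k) / m k) by (apply (proj1 (Rle_div_r _ _ _ H0)); lra).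
rewrite (H_high _ A2), (H_low _ A1). field. lra.
Qed.

Lemma EQL m (hpos : forall k, 0 < m k) j : exists e, 0 < e /\
  forall y, Ssum m j - e < y <= Ssum m j -> Fbig m y = Fj m j y.
Proof.
destruct j as [|k].
- exists 1. split; [lra|]. intros y Hy. apply LOC0; auto. simpl in Hy. lra.
- exists (m k / 16). split; [specialize (hpos k); lra|]. intros y Hy.
  rewrite (LOC m hpos k y). apply LOCprev; auto.
  simpl in *. specialize (hpos k). lra.
Qed.

Lemma Fj_deriv m (hpos : forall k, 0 < m k) j y :
  is_derive (Fj m j) y (hd ((y - Ssum m j) / m j)).
Proof.
unfold Fj. auto_derive.
- eexists. apply H_deriv.
- rewrite (is_derive_unique _ _ _ (H_deriv _)).
  replace ((y + - Ssum m j) * / m j) with ((y - Ssum m j) / m j) by (unfold Rdiv, Rminus; ring).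
  field. specialize (hpos j). lra.
Qed.

Definition piece (m : nat -> R) j x := x <= Ssum m (S j) /\ (j = O \/ Ssum m j <= x).

Lemma DERp m (hpos : forall k, 0 < m k) j x : piece m j x ->
  is_derive (Fbig m) x (hd ((x - Ssum m j) / m j)).
Proof.
intros [Hx1 Hx2].
assert (Hmj := hpos j). assert (HmSj := hpos (S j)).
destruct (Req_dec x (Ssum m (S j))) as [Ex|Nx].
- subst x.
  apply (deriv_glue _ (Fj m j) (Fj m (S j)) _ (Rmin (m j) (m (S j)))).
  + apply Rmin_pos; lra.
  + intros y Hy. apply LOC; auto. assert (Rmin (m j) (m (S j)) <= m j) by apply Rmin_l.
    simpl in *. lra.
  + intros y [Hy1 Hy2]. destruct Hy1 as [Hy1|Hy1].
    * apply LOC; auto. assert (Rmin (m j) (m (S j)) <= m (S j)) by apply Rmin_r.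
      simpl in *. lra.
    * subst y. rewrite (LOC m hpos j). apply LOCprev; auto.
      simpl. lra. simpl. lra.
  + apply LOCprev; auto. lra.
  + apply Fj_deriv; auto.
  + replace (hd ((Ssum m (S j) - Ssum m j) / m j)) with
      (hd ((Ssum m (S j) - Ssum m (S j)) / m (S j))).
    apply Fj_deriv; auto.
    replace ((Ssum m (S j) - Ssum m (S j)) / m (S j)) with 0 by (field; lra).
    replace ((Ssum m (S j) - Ssum m j) / m j) with 1 by (simpl; field; lra).
    rewrite hd_zero, hd_one. reflexivity.
- assert (Hlt : x < Ssum m (S j)) by lra.
  destruct Hx2 as [Hj|Hx2].
  + subst j. simpl in *.
    apply (deriv_int _ (Fj m 0) (Rmin (x - 1) (-1)) (0 + m 0%nat)); [split; [assert (Rmin (x-1) (-1) <= x - 1) by apply Rmin_l; lra|lra]| |].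
    * intros y Hy. destruct (Rle_or_lt y 0).
      -- apply LOC0; auto.
      -- apply LOC; auto. simpl. lra.
    * apply Fj_deriv; auto.
  + destruct (EQL m hpos j) as [e [He HE]].
    apply (deriv_int _ (Fj m j) (Ssum m j - e) (Ssum m (S j))); [lra| |].
    * intros y Hy. destruct (Rle_or_lt y (Ssum m j)).
      -- apply HE; lra.
      -- apply LOC; auto. lra.
    * apply Fj_deriv; auto.
Qed.

Lemma sum_n_Ssum m n : sum_n m n = Ssum m (S n).
Proof.
induction n.
- rewrite sum_O. simpl. symmetry. apply Rplus_0_l.
- rewrite sum_Sn, IHn. simpl. reflexivity.
Qed.

Lemma diverge m (hdiv : is_lim_seq (sum_n m) p_infty) M : exists N, M < Ssum m N.
Proof.
apply is_lim_seq_spec in hdiv. destruct (hdiv M) as [N HN].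
exists (S N). rewrite <- sum_n_Ssum. apply HN. lia.
Qed.

Lemma cover m (hpos : forall k, 0 < m k) (hdiv : is_lim_seq (sum_n m) p_infty) y :
  0 < y -> exists j, Ssum m j < y <= Ssum m (S j).
Proof.
intros Hy. destruct (diverge m hdiv y) as [N HN].
assert (G : forall N, y < Ssum m N -> exists j, Ssum m j < y <= Ssum m (S j)).
{ induction N0; intros HN0.
  - simpl in HN0. lra.
  - destruct (Rle_or_lt y (Ssum m N0)) as [Hle|Hgt].
    + destruct Hle as [Hle|Heq]. apply IHN0; auto.
      destruct N0. simpl in Heq. lra.
      exists N0. split; [|lra]. simpl in *. specialize (hpos N0). lra.
    + exists N0. lra. }
apply (G N HN).
Qed.

Lemma DERall m (hpos : forall k, 0 < m k) (hdiv : is_lim_seq (sum_n m) p_infty) x :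
  exists j, piece m j x.
Proof.
destruct (Rle_or_lt x (Ssum m 1)) as [Hx|Hx].
- exists O. split; auto.
- destruct (cover m hpos hdiv x) as [j Hj].
  assert (H0 := Ssum_nonneg m hpos 1). lra.
  exists j. split; [lra|right; lra].
Qed.

Lemma lip_piece m (hpos : forall k, 0 < m k) j y z : piece m j y -> piece m j z ->
  Rabs (Derive (Fbig m) y - Derive (Fbig m) z) <= Kh / m j * Rabs (y - z).
Proof.
intros Py Pz.
rewrite (is_derive_unique _ _ _ (DERp m hpos j y Py)).
rewrite (is_derive_unique _ _ _ (DERp m hpos j z Pz)).
eapply Rle_trans. apply hd_lip.
assert (Hm := hpos j).
replace ((y - Ssum m j) / m j - (z - Ssum m j) / m j) with ((y - z) / m j) by (field; lra).
unfold Rdiv. rewrite Rabs_mult, (Rabs_right (/ m j)).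
right; ring. left; apply Rinv_0_lt_compat; lra.
Qed.

Fixpoint Lsum (m : nat -> R) N := match N with O => Kh / m O | S n => Lsum m n + Kh / m (S n) end.

Lemma Kdiv_pos (m : nat -> R) (hpos : forall k, 0 < m k) j : 0 < Kh / m j.
Proof. apply Rdiv_lt_0_compat. apply Kh_pos. apply hpos. Qed.

Lemma chain m (hpos : forall k, 0 < m k) N y z : y <= z <= Ssum m (S N) ->
  Rabs (Derive (Fbig m) y - Derive (Fbig m) z) <= Lsum m N * (z - y).
Proof.
revert y z. induction N; intros y z Hyz.
- simpl Lsum. replace (z - y) with (Rabs (y - z)) by (rewrite Rabs_left1; lra).
  apply lip_piece; auto; split; auto; lra.
- assert (KP := Kdiv_pos m hpos (S N)).
  destruct (Rle_or_lt z (Ssum m (S N))) as [Hz|Hz].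
  + eapply Rle_trans. apply IHN; lra. simpl Lsum. nra.
  + assert (Hp : forall w, Ssum m (S N) <= w <= Ssum m (S (S N)) -> piece m (S N) w).
    { intros w Hw. split; [lra|right; lra]. }
    destruct (Rle_or_lt (Ssum m (S N)) y) as [Hy|Hy].
    * eapply Rle_trans. apply lip_piece with (j := S N); auto; apply Hp; lra.
      rewrite Rabs_left1 by lra.
      assert (0 <= Lsum m N).
      { clear -hpos. induction N; simpl. left; apply Kdiv_pos; auto.
        assert (H' := Kdiv_pos m hpos (S N)). lra. }
      simpl Lsum. nra.
    * set (b := Ssum m (S N)) in *.
      replace (Derive (Fbig m) y - Derive (Fbig m) z) with
        ((Derive (Fbig m) y - Derive (Fbig m) b) + (Derive (Fbig m) b - Derive (Fbig m) z)) by ring.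
      eapply Rle_trans. apply Rabs_triang.
      assert (A1 := IHN y b ltac:(lra)).
      assert (A2 := lip_piece m hpos (S N) b z ltac:(apply Hp; lra) ltac:(apply Hp; lra)).
      rewrite (Rabs_left1 (b - z)) in A2 by lra.
      assert (0 <= Lsum m N).
      { clear -hpos. induction N; simpl. left; apply Kdiv_pos; auto.
        assert (H' := Kdiv_pos m hpos (S N)). lra. }
      simpl Lsum. nra.
Qed.

Lemma m_bounded m (hpos : forall k, 0 < m k) (hlim : is_lim_seq m 0) :
  exists M, forall n, m n <= M.
Proof.
apply is_lim_seq_spec in hlim. destruct (hlim (mkposreal 1 Rlt_0_1)) as [N HN].
exists (1 + Ssum m N). intros n.
assert (H0 := Ssum_nonneg m hpos N).
destruct (Compare_dec.le_lt_dec N n) as [Hn|Hn].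
- specialize (HN n Hn). simpl in HN. rewrite Rminus_0_r in HN.
  apply Rabs_def2 in HN. lra.
- assert (HS : Ssum m (S n) <= Ssum m N) by (apply Ssum_le; auto).
  simpl in HS. assert (H1 := Ssum_nonneg m hpos n). lra.
Qed.

Theorem proposition5p3 (m : nat -> R)
  (hpos : forall k, 0 < m k)
  (hdiv : is_lim_seq (sum_n m) p_infty)
  (hlim : is_lim_seq m 0) :
  (forall x, continuous (Fbig m) x) /\
  (forall x, ex_derive (Fbig m) x) /\
  (exists B : R, forall x, B <= Fbig m x) /\
  (forall x : R, exists delta : R, 0 < delta /\ exists L : R,
      forall y z : R, Rabs (y - x) < delta -> Rabs (z - x) < delta ->
        Rabs (Derive (Fbig m) y - Derive (Fbig m) z) <= L * Rabs (y - z)) /\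
  (forall j : nat, Fbig m (Ssum m j) = Ssum m j / 2) /\
  (forall j : nat, is_derive (Fbig m) (Ssum m j) (-1)).
Proof.
assert (EX : forall x, ex_derive (Fbig m) x).
{ intros x. destruct (DERall m hpos hdiv x) as [j Pj]. eexists. apply DERp; eauto. }
split; [|split; [exact EX|split; [|split; [|split]]]].
- intros x. apply (ex_derive_continuous (K := R_AbsRing) (V := R_NormedModule)). apply EX.
- destruct (m_bounded m hpos hlim) as [M HM].
  exists (- M / 8). intros x.
  destruct (Rle_or_lt x 0) as [Hx|Hx].
  + unfold Fbig. destruct (Rle_dec x 0); [|lra].
    assert (0 < m O) by apply hpos. assert (m O <= M) by apply HM. lra.
  + destruct (cover m hpos hdiv x Hx) as [j Hj].
    rewrite (LOC m hpos j x Hj). unfold Fj.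
    assert (Hm := hpos j). assert (HMj := HM j). assert (H0 := Ssum_nonneg m hpos j).
    assert (Hb : -1/8 <= H ((x - Ssum m j) / m j)).
    { apply H_lb. simpl in Hj. split.
      - apply Rdiv_le_0_compat; lra.
      - apply (proj2 (Rle_div_l _ _ _ Hm)). lra. }
    nra.
- intros x. exists 1. split; [lra|].
  destruct (diverge m hdiv (x + 1)) as [N HN].
  exists (Lsum m N).
  assert (HN' : x + 1 < Ssum m (S N)).
  { assert (Ssum m N <= Ssum m (S N)) by (apply Ssum_le; auto). lra. }
  intros y z Hy Hz. apply Rabs_def2 in Hy. apply Rabs_def2 in Hz.
  destruct (Rle_or_lt y z) as [Hyz|Hyz].
  + rewrite (Rabs_left1 (y - z)) by lra. replace (- (y - z)) with (z - y) by ring.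
    apply chain; auto. lra.
  + rewrite Rabs_minus_sym, (Rabs_right (y - z)) by lra.
    apply chain; auto. lra.
- intros j. destruct j as [|k].
  + unfold Fbig. simpl. destruct (Rle_dec 0 0); lra.
  + rewrite (LOC m hpos k). unfold Fj. simpl.
    assert (Hm := hpos k).
    replace ((Ssum m k + m k - Ssum m k) / m k) with 1 by (field; lra).
    rewrite H_one. field.
    simpl. specialize (hpos k). lra.
- intros j. replace (-1) with (hd ((Ssum m j - Ssum m j) / m j)).
  apply DERp; auto. split. assert (Hm := hpos j). simpl. lra. right; lra.
  replace ((Ssum m j - Ssum m j) / m j) with 0. apply hd_zero.
  assert (Hm := hpos j). field. lra.
Qed.
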